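(* Let $E$ be a $k$-dimensional subspace of $\mathbb{C}^n$ with $k>1$ such that $E$ does not contain the fully synchrony subspace $F=\{x_1=\cdots=x_n\}$. Then there exist one-dimensional subspaces $J_1,\dots,J_k$ of $E$, each special in $E$, such that $E=J_1\oplus\cdots\oplus J_k$.
   Context: A polydiagonal is a subspace of $\mathbb{C}^n$ of the form $\{x\in\mathbb{C}^n : x_i=x_j \text{ for all } (i,j)\in R\}$ for some (possibly empty) set $R$ of pairs of indices in $\{1,\dots,n\}$. For a subspace $W\subseteq\mathbb{C}^n$, $P(W)$ denotes the smallest polydiagonal containing $W$. Given a subspace $E$ of $\mathbb{C}^n$, a subspace $W$ of $E$ is called special in $E$ if for every subspace $U$ of $E$ with $\dim U=\dim W$ and $P(U)\subseteq P(W)$ one has $P(U)=P(W)$. *)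

(* Defs.v *)
(* C^n is modelled as row vectors 'rV[C]_n over an
   arbitrary numeric algebraically closed field C (e.g. algC); subspaces are
   row spaces of matrices (mxalgebra). *)
From HB Require Import structures.
From mathcomp Require Import all_boot all_order all_algebra.
Set Implicit Arguments. Unset Strict Implicit. Unset Printing Implicit Defensive.
Import GRing.Theory Num.Theory.
Local Open Scope ring_scope.

Section Polydiag.
Variables (C : numClosedFieldType) (n : nat).

Definition diff_col (p : 'I_n * 'I_n) : 'cV[C]_n :=
  \col_k ((k == p.1)%:R - (k == p.2)%:R).

(* polydiagonal {x | x_i = x_j for all (i,j) in R} as a subspace (row space) *)
Definition polydiag (R : {set 'I_n * 'I_n}) : 'M[C]_n :=
  (\bigcap_(p in R) kermx (diff_col p))%MS.

Definition is_polydiag (D : 'M[C]_n) : Prop :=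
  exists R : {set 'I_n * 'I_n}, (D == polydiag R)%MS.

(* P(W): the smallest polydiagonal containing W, namely the polydiagonal
   of all pairs (i,j) with x_i = x_j for every x in W (rows of W span W) *)
Definition eqpairs (W : 'M[C]_n) : {set 'I_n * 'I_n} :=
  [set p | [forall r : 'I_n, W r p.1 == W r p.2]].

Definition Pcl (W : 'M[C]_n) : 'M[C]_n := polydiag (eqpairs W).

Definition special_in (E W : 'M[C]_n) : Prop :=
  (W <= E)%MS /\
  forall U : 'M[C]_n, (U <= E)%MS -> \rank U = \rank W ->
    (Pcl U <= Pcl W)%MS -> (Pcl U == Pcl W)%MS.

(* the full synchrony subspace F = {x_1 = ... = x_n} *)
Definition synchrony : 'rV[C]_n := const_mx 1.

End Polydiag.

(* Main.v *)
Require Import Defs.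
From HB Require Import structures.
From mathcomp Require Import all_boot all_order all_algebra.
From mathcomp Require Import ring.
From Stdlib Require Import Classical.
Import GRing.Theory Num.Theory.
Local Open Scope ring_scope.

Section Aux.
Variables (C : numClosedFieldType) (n : nat).
Set Implicit Arguments. Unset Strict Implicit.

Lemma sum_ind (v : 'rV[C]_n) a :
  \sum_i v 0 i * (i == a)%:R = v 0 a.
Proof.
rewrite (bigD1 a) //= eqxx mulr1 big1 ?addr0 // => i /negPf ->; by rewrite mulr0.
Qed.

Lemma diffE (v : 'rV[C]_n) p :
  (v *m diff_col C p) 0 0 = v 0 p.1 - v 0 p.2.
Proof.
rewrite !mxE.
under eq_bigr do rewrite mxE mulrBr.
by rewrite sumrB !sum_ind.
Qed.

Lemma polydiagP (R : {set 'I_n * 'I_n}) (v : 'rV[C]_n) :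
  reflect (forall p, p \in R -> v 0 p.1 = v 0 p.2) (v <= polydiag C R)%MS.
Proof.
apply: (iffP sub_bigcapmxP) => H p pR.
  have /sub_kermxP := H p pR.
  move/matrixP/(_ 0 0); rewrite diffE mxE => /eqP.
  by rewrite subr_eq0 => /eqP.
apply/sub_kermxP; apply/matrixP => i j; rewrite (ord1 i) (ord1 j) diffE mxE.
by rewrite (H p pR) subrr.
Qed.

Definition eqp (v : 'rV[C]_n) : {set 'I_n * 'I_n} :=
  [set p | v 0 p.1 == v 0 p.2].

Definition good (E : 'M[C]_n) (w : 'rV[C]_n) :=
  [/\ (w <= E)%MS, w != 0 & forall u : 'rV[C]_n, (u <= E)%MS -> u != 0 ->
      eqp w \subset eqp u -> eqp u \subset eqp w].

Lemma nonconst (E : 'M[C]_n) (u : 'rV[C]_n) :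
  ~~ (synchrony C n <= E)%MS -> (u <= E)%MS -> u != 0 ->
  exists a b, u 0 a != u 0 b.
Proof.
move=> nsE uE u0.
case: (boolP [exists a, exists b, u 0 a != u 0 b]) => [/existsP[a /existsP[b h]]|].
  by exists a, b.
rewrite negb_exists => /forallP H.
have [j uj] : exists j, u 0 j != 0.
  case: (boolP [exists j, u 0 j != 0]) => [/existsP[j h]|]; first by exists j.
  rewrite negb_exists => /forallP H2; exfalso; move/eqP: u0; apply.
  apply/matrixP => i l; rewrite mxE (ord1 i).
  by move: (H2 l); rewrite negbK => /eqP.
have es : synchrony C n = (u 0 j)^-1 *: u.
  apply/matrixP => i l; rewrite !mxE (ord1 i).
  move: (H j); rewrite negb_exists => /forallP/(_ l); rewrite negbK => /eqP <-.
  by rewrite mulVf.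
by move: nsE; rewrite es scalemx_sub.
Qed.

Lemma good_span (E : 'M[C]_n) m (G : 'M[C]_(m, n)) :
  ~~ (synchrony C n <= E)%MS -> (forall g, good E g -> (g <= G)%MS) ->
  forall x : 'rV[C]_n, (x <= E)%MS -> (x <= G)%MS.
Proof.
move=> nsE HG x; have [N] := ubnP #|~: eqp x|; elim: N x => [|N IH] x.
  by rewrite ltn0.
rewrite ltnS => lt xE.
case: (eqVneq x 0) => [->|x0]; first exact: sub0mx.
case: (classic (exists u : 'rV_n, [/\ (u <= E)%MS, u != 0, eqp x \subset eqp u
   & ~~ (eqp u \subset eqp x)])); last first.
  move=> NE; apply: HG; split => // u uE u0 sub.
  by apply/negPn/negP => ns; apply: NE; exists u.
case=> u [uE u0 sxu nsux].
have ltu : (#|~: eqp u| < N)%N.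
  apply: leq_trans lt; apply: proper_card; rewrite properC properE sxu.
  exact: nsux.
have [a [b uab]] := nonconst nsE uE u0.
pose c := (x 0 a - x 0 b) / (u 0 a - u 0 b).
pose y := x - c *: u.
have yE : (y <= E)%MS by rewrite addmx_sub // eqmx_opp scalemx_sub.
have ey : forall i, y 0 i = x 0 i - c * u 0 i by move=> i; rewrite !mxE.
have sxy : eqp x \proper eqp y.
  rewrite properE; apply/andP; split.
    apply/subsetP => p px; have pu := subsetP sxu p px.
    by move: px pu; rewrite !inE !ey => /eqP -> /eqP ->.
  apply/subsetPn; exists (a, b).
    rewrite inE !ey /=; apply/eqP; rewrite /c.
    have ne : u 0 a - u 0 b != 0 by rewrite subr_eq0.
    by field.
  apply: contra uab => pab; have := subsetP sxu _ pab; rewrite inE.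
  done.
have lty : (#|~: eqp y| < N)%N.
  by apply: leq_trans lt; apply: proper_card; rewrite properC.
have uG := IH u ltu uE; have yG := IH y lty yE.
have -> : x = y + c *: u by rewrite /y subrK.
by rewrite addmx_sub // scalemx_sub.
Qed.

Lemma row_rV1 (g : 'rV[C]_n) (j : 'I_1) : row j g = g.
Proof. by apply/rowP => c; rewrite mxE (ord1 j). Qed.

Lemma build (E : 'M[C]_n) k : ~~ (synchrony C n <= E)%MS -> \rank E = k ->
  forall m, (m <= k)%N -> exists A : 'M[C]_(m, n),
    (forall i, good E (row i A)) /\ \rank A = m.
Proof.
move=> nsE rE; elim => [|m IH] lemk.
  by exists 0; split; [case | rewrite mxrank0].
have [A [gA rA]] := IH (ltnW lemk).
have [g [gg gA']] : exists g, good E g /\ ~~ (g <= A)%MS.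
  apply: NNPP => NE.
  have : (E <= A)%MS.
    apply/row_subP => i; apply: (good_span nsE) (row_sub i E) => g gg.
    by apply/negPn/negP => h; apply NE; exists g.
  by move/mxrankS; rewrite rA rE => h; move: lemk; rewrite ltnNge h.
exists (col_mx g A); split.
  move=> i; pose i' : 'I_(1 + m) := i; rewrite -[i]/i' -(splitK i'); case: (split i') => j /=.
    rewrite (_ : row _ _ = g) //; exact: (etrans (rowKu j g A) (row_rV1 g j)).
  rewrite (_ : row _ _ = row j A); first exact: gA; exact: (rowKd j g A).
rewrite (_ : \rank _ = \rank (g + A)%MS); last first.
  by apply: esym; apply: eqmx_rank; apply/eqmxP; exact: addsmxE.
change (\rank (g + A)%MS = m.+1 :> nat).
apply/eqP; rewrite eqn_leq; apply/andP; split.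
  apply: leq_trans (mxrank_adds_leqif g A).1 _.
  by case: gg => _ g0 _; rewrite rank_rV g0 rA.
have : (A < g + A)%MS by rewrite ltmxE addsmxSr /= addsmx_sub submx_refl andbT.
by rewrite ltmxErank rA => /andP[_].
Qed.

End Aux.

Theorem mainTheorem3 (C : numClosedFieldType) (n k : nat) (E : 'M[C]_n) :
  (1 < k)%N -> \rank E = k -> ~~ (synchrony C n <= E)%MS ->
  exists J : 'I_k -> 'M[C]_n,
    [/\ forall i, \rank (J i) = 1%N,
        forall i, special_in E (J i),
        mxdirect (\sum_i J i) &
        (\sum_i J i == E)%MS].
Proof.
move=> k1 rE nsE.
have [A [gA rA]] := build nsE rE (leqnn k).
have n0 : (0 < n)%N.
  by have := rank_leq_col E; rewrite rE; apply: leq_trans; apply: ltnW.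
pose J i : 'M[C]_n := \matrix_(r, c) A i c.
have JE : forall i, (J i :=: row i A)%MS.
  move=> i; apply/eqmxP; apply/andP; split.
    apply/row_subP => r.
    have -> : row r (J i) = row i A by apply/rowP => c; rewrite !mxE.
    exact: submx_refl.
  have -> : row i A = row (Ordinal n0) (J i) by apply/rowP => c; rewrite !mxE.
  exact: row_sub.
have eqJ : forall i, eqpairs (J i) = eqp (row i A).
  move=> i; apply/setP => p; rewrite !inE.
  apply/forallP/idP => [H|H r]; first by have := H (Ordinal n0); rewrite !mxE.
  by rewrite !mxE; move: H; rewrite !mxE.
have AE : (A <= E)%MS by apply/row_subP => i; case: (gA i).
have SA : (\sum_i J i == A)%MS.
  apply/andP; split.
    by apply/sumsmx_subP => i _; rewrite JE row_sub.
  apply/row_subP => i; apply: (sumsmx_sup i) => //; by rewrite JE.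
move/eqmxP: SA => SA.
exists J; split.
- by move=> i; rewrite JE rank_rV; case: (gA i) => _ ->.
- move=> i; split; first by rewrite JE; case: (gA i).
  move=> U UE rU sP.
  have UP : (U <= Pcl U)%MS.
    apply/row_subP => r; apply/polydiagP => p; rewrite inE => /forallP/(_ r)/eqP.
    by rewrite !mxE.
  have s1 : eqpairs (J i) \subset eqpairs U.
    apply/subsetP => p pJ; rewrite inE; apply/forallP => r.
    have := submx_trans (row_sub r U) (submx_trans UP sP).
    by move/polydiagP/(_ p pJ); rewrite !mxE => ->.
  have [r0 ur0] : exists r0, row r0 U != 0.
    case: (boolP [exists r, row r U != 0]) => [/existsP[r h]|]; first by exists r.
    rewrite negb_exists => /forallP H; exfalso.
    have U0 : U = 0.
      apply/matrixP => r c; move: (H r); rewrite negbK => /eqP/rowP/(_ c).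
      by rewrite !mxE.
    by move: rU; rewrite U0 mxrank0 JE rank_rV; case: (gA i) => _ ->.
  have uE := submx_trans (row_sub r0 U) UE.
  have s2 : eqpairs U \subset eqp (row r0 U).
    by apply/subsetP => p; rewrite !inE => /forallP/(_ r0); rewrite !mxE.
  have s3 : eqp (row r0 U) \subset eqp (row i A).
    case: (gA i) => _ _; apply => //; rewrite -eqJ; exact: subset_trans s1 s2.
  have e : eqpairs U = eqpairs (J i).
    apply/eqP; rewrite eqEsubset s1 andbT eqJ; exact: subset_trans s2 s3.
  by rewrite /Pcl e !submx_refl.
- rewrite mxdirectE /= SA rA.
  under eq_bigr do rewrite JE rank_rV.
  rewrite (eq_bigr (fun _ => 1%N)); last by move=> i _; case: (gA i) => _ ->.
  by rewrite sum1_card card_ord.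
- have := mxrank_leqif_eq AE; rewrite rA rE => /leqif_refl/andP[h1 h2].
  apply/andP; split; first by rewrite SA.
  by apply: submx_trans h2 _; rewrite SA.
Qed.
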